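(* Consider the fixed cost inverse fractional knapsack problem (defined in the context), and let $$L=\max_{i\in I^0}\frac{p_i-\bar z_i}{c_i},\qquad U=\min_{i\in I^1}\frac{p_i+\bar z_i}{c_i},$$ where $\bar z_i=\bar u_i$ for $i\in I^1$ and $\bar z_i=\bar v_i$ for $i\in I^0$. Then the problem is feasible (i.e., there exists a feasible modification making $x^*$ optimal) if and only if $L\le U$.
   Context: Given positive integers $p_i,c_i$ ($i=1,\dots,n$), a budget $b$, and a vector $x^*\in\{0,1\}^n$ with $\sum_{i=1}^n c_i x^*_i=b$. Let $I^1=\{i:x^*_i=1\}$ and $I^0=\{i:x^*_i=0\}$. Given nonnegative integer bounds $\bar u_i,\bar v_i$. A feasible modification is $(u,v)$ with $u_i\in[0,\bar u_i]\cap\mathbb Z$, $v_i\in[0,\bar v_i]\cap\mathbb Z$, giving modified profits $\tilde p_i=p_i+u_i-v_i$; the costs $c_i$ are fixed. The fixed cost inverse fractional knapsack problem asks for a feasible modification such that $x^*$ is an optimal solution of $\max\{\sum_i\tilde p_i x_i:\sum_i c_ix_i\le b,\ x_i\in[0,1]\}$, minimizing a nondecreasing cost of the modification. *)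

(* Defs.v *)
From HB Require Import structures.
From mathcomp Require Import all_boot all_order all_algebra.
From mathcomp Require Import constructive_ereal.
Set Implicit Arguments. Unset Strict Implicit. Unset Printing Implicit Defensive.
Import Order.TTheory GRing.Theory Num.Theory.
Local Open Scope ring_scope.

Section FCIFK.
Variables (R : realFieldType) (n : nat).

Definition mod_profit (p u v : 'I_n -> nat) (i : 'I_n) : R :=
  (p i)%:R + (u i)%:R - (v i)%:R.

Definition frac_knapsack_optimal (pt : 'I_n -> R) (c : 'I_n -> nat) (b : nat)
    (xstar : 'I_n -> bool) : Prop :=
  \sum_(i < n) (c i)%:R * (xstar i)%:R <= (b%:R : R) /\
  forall x : 'I_n -> R,
    (forall i, 0 <= x i <= 1) ->
    \sum_(i < n) (c i)%:R * x i <= b%:R ->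
    \sum_(i < n) pt i * x i <= \sum_(i < n) pt i * (xstar i)%:R.

Definition feasible_modification (ubar vbar u v : 'I_n -> nat) : Prop :=
  forall i, (u i <= ubar i)%N /\ (v i <= vbar i)%N.

Definition fcifk_feasible (p c : 'I_n -> nat) (b : nat) (xstar : 'I_n -> bool)
    (ubar vbar : 'I_n -> nat) : Prop :=
  exists u v : 'I_n -> nat,
    feasible_modification ubar vbar u v /\
    frac_knapsack_optimal (mod_profit p u v) c b xstar.

Definition zbar (xstar : 'I_n -> bool) (ubar vbar : 'I_n -> nat) (i : 'I_n) : nat :=
  if xstar i then ubar i else vbar i.

Definition Lbound (p c : 'I_n -> nat) (xstar : 'I_n -> bool) (ubar vbar : 'I_n -> nat)
  : \bar R :=
  (\big[maxe/-oo]_(i < n | ~~ xstar i)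
     (((p i)%:R - (zbar xstar ubar vbar i)%:R) / (c i)%:R)%:E)%E.

Definition Ubound (p c : 'I_n -> nat) (xstar : 'I_n -> bool) (ubar vbar : 'I_n -> nat)
  : \bar R :=
  (\big[mine/+oo]_(i < n | xstar i)
     (((p i)%:R + (zbar xstar ubar vbar i)%:R) / (c i)%:R)%:E)%E.

End FCIFK.

(* Main.v *)
Require Import Defs.
From mathcomp Require Import all_boot all_order all_algebra.
From mathcomp Require Import constructive_ereal.
From mathcomp Require Import ring lra.
Import Order.TTheory GRing.Theory Num.Theory.
Local Open Scope ring_scope.

Lemma LU_iff (R : realFieldType) (n : nat)
    (p c : 'I_n -> nat) (xstar : 'I_n -> bool) (ubar vbar : 'I_n -> nat) :
  (Lbound R p c xstar ubar vbar <= Ubound R p c xstar ubar vbar)%E <->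
  (forall j k, ~~ xstar j -> xstar k ->
     ((p j)%:R - (vbar j)%:R) / (c j)%:R <= ((p k)%:R + (ubar k)%:R) / (c k)%:R :> R).
Proof.
rewrite /Lbound /Ubound; split.
- move=> H j k Hj Hk.
  have E1 : (p j)%:R - (vbar j)%:R = (p j)%:R - (zbar xstar ubar vbar j)%:R :> R.
    by rewrite /zbar (negbTE Hj).
  have E2 : (p k)%:R + (ubar k)%:R = (p k)%:R + (zbar xstar ubar vbar k)%:R :> R.
    by rewrite /zbar Hk.
  rewrite E1 E2 -lee_fin.
  apply: le_trans (le_trans H _).
  - exact: (le_bigmax_cond _ (fun i => (((p i)%:R - (zbar xstar ubar vbar i)%:R) / (c i)%:R)%:E) Hj).
  - exact: (bigmin_le_cond _ (fun i => (((p i)%:R + (zbar xstar ubar vbar i)%:R) / (c i)%:R)%:E) Hk).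
- move=> H; apply: bigmax_le; first exact: leNye.
  move=> j Hj; apply: le_bigmin; first exact: leey.
  move=> k Hk; rewrite lee_fin /zbar (negbTE Hj) Hk; exact: H.
Qed.

Lemma sum_two (R : realFieldType) (n : nat) (f : 'I_n -> R) (j k : 'I_n) (t s : R) :
  j != k ->
  \sum_(i < n) f i * (if i == j then t else if i == k then s else 0)
  = f j * t + f k * s.
Proof.
move=> jk.
rewrite (bigD1 j) //= eqxx (bigD1 k) /=; last by rewrite eq_sym.
rewrite eq_sym (negbTE jk) eqxx big1 ?addr0 //.
by move=> i /andP[/negbTE -> /negbTE ->]; rewrite mulr0.
Qed.

Theorem mainTheorem3 (R : realFieldType) (n : nat)
    (p c : 'I_n -> nat) (b : nat) (xstar : 'I_n -> bool) (ubar vbar : 'I_n -> nat)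
    (hp : forall i, (0 < p i)%N) (hc : forall i, (0 < c i)%N)
    (hb : (\sum_(i < n) c i * xstar i)%N = b) :
  fcifk_feasible R p c b xstar ubar vbar <->
  (Lbound R p c xstar ubar vbar <= Ubound R p c xstar ubar vbar)%E.
Proof.
have hbR : \sum_(i < n) (c i)%:R * (xstar i)%:R = (b%:R : R).
  by rewrite -hb natr_sum; apply: eq_bigr => i _; rewrite natrM.
have cpos : forall i, 0 < (c i)%:R :> R by move=> i; rewrite ltr0n.
rewrite LU_iff; split.
- move=> [u [v [Hf [_ Hopt]]]] j k Hj Hk.
  have jk : j != k by apply/eqP => E; move: Hj; rewrite E Hk.
  pose d i : R := if i == j then (c j)%:R^-1 else if i == k then - (c k)%:R^-1 else 0.
  pose x i : R := (xstar i)%:R + d i.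
  have sx : forall f : 'I_n -> R, \sum_(i < n) f i * x i =
      \sum_(i < n) f i * (xstar i)%:R + (f j / (c j)%:R - f k / (c k)%:R).
    move=> f; rewrite /x; under eq_bigr do rewrite mulrDr.
    by rewrite big_split /= /d sum_two // mulrN.
  have := Hopt x.
  rewrite !sx => H.
  have {}H : mod_profit R p u v j / (c j)%:R <= mod_profit R p u v k / (c k)%:R.
    suff : mod_profit R p u v j / (c j)%:R - mod_profit R p u v k / (c k)%:R <= 0 by lra.
    have Hx : forall i, 0 <= x i <= 1.
      move=> i; rewrite /x /d.
      have c1 : forall l, (c l)%:R^-1 <= 1 :> R.
        by move=> l; rewrite invr_le1 ?unitf_gt0 ?cpos // ler1n hc.
      have c0 : forall l, 0 <= (c l)%:R^-1 :> R by move=> l; rewrite invr_ge0 ltW.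
      case: eqP => [->|_]; first by rewrite (negbTE Hj) add0r c0 c1.
      case: eqP => [->|_].
        rewrite Hk /=; have := c0 k; have := c1 k; move=> a b'; apply/andP; split; lra.
      by case: (xstar i); rewrite addr0 ?ler01 ?lexx.
    move: (H Hx); rewrite hbR !divff ?subrr ?addr0 ?gt_eqF // ?lexx => H'.
    have := H' isT; lra.
  have [Hu Hv] := Hf j; have [Hu' Hv'] := Hf k.
  apply: le_trans (le_trans H _).
    apply: ler_wpM2r; first by rewrite invr_ge0 ltW.
    rewrite /mod_profit. have : (v j)%:R <= (vbar j)%:R :> R by rewrite ler_nat.
    have : 0 <= (u j)%:R :> R by [].
    lra.
  apply: ler_wpM2r; first by rewrite invr_ge0 ltW.
  rewrite /mod_profit. have : (u k)%:R <= (ubar k)%:R :> R by rewrite ler_nat.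
  have : 0 <= (v k)%:R :> R by [].
  lra.
- move=> H.
  pose r i : R := ((p i)%:R - (vbar i)%:R) / (c i)%:R.
  pose lam := \big[Num.max/0]_(i < n | ~~ xstar i) r i.
  have lam0 : 0 <= lam.
    by rewrite /lam bigmax_idl le_max lexx.
  have lamr : forall i, ~~ xstar i -> r i <= lam.
    by move=> i Hi; apply: le_bigmax_cond.
  have laml : forall k, xstar k -> lam <= ((p k)%:R + (ubar k)%:R) / (c k)%:R.
    move=> k Hk; apply: bigmax_le.
      by apply: divr_ge0; [apply: addr_ge0; exact: ler0n | exact: ltW (cpos k)].
    by move=> i Hi; apply: H.
  pose u i := if xstar i then ubar i else 0%N.
  pose v i := if xstar i then 0%N else vbar i.
  exists u, v; split.
    by move=> i; rewrite /u /v; case: (xstar i).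
  split; first by rewrite hbR.
  move=> x Hx Hcx.
  set pt := mod_profit R p u v.
  have term : forall i, (pt i - lam * (c i)%:R) * x i
                     <= (pt i - lam * (c i)%:R) * (xstar i)%:R.
    move=> i; have /andP[x0 x1] := Hx i.
    rewrite /pt /mod_profit /u /v.
    case E: (xstar i).
    + rewrite mulr1; apply: ler_piMr => //.
      have := laml i E; rewrite ler_pdivlMr // => h.
      rewrite subr0; lra.
    + rewrite mulr0; apply: mulr_le0_ge0 => //.
      have := lamr i (negbT E); rewrite /r ler_pdivrMr // => h.
      rewrite addr0; lra.
  have e1 : forall y : 'I_n -> R, \sum_(i < n) (pt i - lam * (c i)%:R) * y i
      = \sum_(i < n) pt i * y i - lam * \sum_(i < n) (c i)%:R * y i.
    move=> y; rewrite mulr_sumr -sumrB; apply: eq_bigr => i _; ring.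
  have : \sum_(i < n) (pt i - lam * (c i)%:R) * x i <=
         \sum_(i < n) (pt i - lam * (c i)%:R) * (xstar i)%:R.
    by apply: ler_sum => i _; exact: term.
  rewrite !e1 hbR.
  have : lam * \sum_(i < n) (c i)%:R * x i <= lam * b%:R by apply: ler_wpM2l.
  lra.
Qed.
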